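(* Let $S''=\{UD-DU : U \text{ an upper prime},\ D \text{ a lower prime}\}$. Then $S''$ generates the ideal $\mathcal{J}$ (as a two-sided ideal of $\mathcal{A}$).
   Context: $\mathcal{A}$ is the free associative $\mathbb{C}$-algebra on noncommuting generators $L,R$; words are finite products of these letters. A word is balanced if it contains equally many $L$'s and $R$'s. $\mathcal{J}$ is the two-sided ideal of $\mathcal{A}$ generated by $S=\{FG-GF : F,G \text{ nonempty balanced words}\}$. A word is prime if it is nonempty, balanced, and cannot be written as a product of two nonempty balanced words. For a balanced word $W=a_1\cdots a_n$, $e_k(W)=\sum_{i=1}^k\overline{a_i}$ ($0\le k\le n$) with $\overline{R}=1$, $\overline{L}=-1$. A prime $P$ of length $n$ is an upper prime if $e_k(P)>0$ for $1\le k\le n-1$, and a lower prime if $e_k(P)<0$ for $1\le k\le n-1$. *)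

(* Defs.v *)
From mathcomp Require Import all_boot all_algebra.
From mathcomp Require Import Rstruct complex.
Set Implicit Arguments. Unset Strict Implicit. Unset Printing Implicit Defensive.
Import GRing.Theory.
Local Open Scope ring_scope.

Definition CC : fieldType := (Rdefinitions.R)[i].

Definition word := seq bool.
Definition letR : bool := true.
Definition letL : bool := false.

Definition balanced (w : word) : bool :=
  count (fun a => a == letR) w == count (fun a => a == letL) w.

Definition prime_word (w : word) : Prop :=
  w != [::] /\ balanced w /\
  ~ (exists u v : word, [/\ u != [::], v != [::], balanced u, balanced v & w = u ++ v]).

Definition ek (k : nat) (w : word) : int :=
  \sum_(i < k) (if nth letL w i == letR then 1 else -1).

Definition upper_prime (w : word) : Prop :=
  prime_word w /\ forall k, (1 <= k)%N -> (k <= (size w).-1)%N -> 0 < ek k w.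

Definition lower_prime (w : word) : Prop :=
  prime_word w /\ forall k, (1 <= k)%N -> (k <= (size w).-1)%N -> ek k w < 0.

(* Noncommutative series in L, R: coefficient functions on words. *)
Definition ser := word -> CC.

(* The free algebra A: series with finite support. *)
Definition inA (f : ser) : Prop :=
  exists s : seq word, forall w, w \notin s -> f w = 0.

Definition szero : ser := fun _ => 0.
Definition sadd (f g : ser) : ser := fun w => f w + g w.
Definition ssub (f g : ser) : ser := fun w => f w - g w.
Definition smul (f g : ser) : ser :=
  fun w => \sum_(i < (size w).+1) f (take i w) * g (drop i w).
Definition mono (u : word) : ser := fun w => if w == u then 1 else 0.

Definition is_ideal (I : ser -> Prop) : Prop :=
  [/\ forall x, I x -> inA x,
      I szero,
      forall x y, I x -> I y -> I (sadd x y),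
      forall a x, inA a -> I x -> I (smul a x)
    & forall a x, inA a -> I x -> I (smul x a)].

Definition gen_ideal (S : ser -> Prop) (x : ser) : Prop :=
  forall I, is_ideal I -> (forall s, S s -> I s) -> I x.

Definition Sgen (x : ser) : Prop :=
  exists F G : word, [/\ F != [::], G != [::], balanced F, balanced G &
    x = ssub (mono (F ++ G)) (mono (G ++ F))].

Definition Sgen'' (x : ser) : Prop :=
  exists U D : word, [/\ upper_prime U, lower_prime D &
    x = ssub (mono (U ++ D)) (mono (D ++ U))].

(* Main.v *)
Require Import Defs.
From mathcomp Require Import all_boot all_algebra.
From mathcomp Require Import Rstruct complex.
From mathcomp Require Import ring zify.
From Stdlib Require Import FunctionalExtensionality.
Set Implicit Arguments. Unset Strict Implicit. Unset Printing Implicit Defensive.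
Import GRing.Theory.
Local Open Scope ring_scope.

Lemma smul_subl f g h : smul (ssub f g) h = ssub (smul f h) (smul g h).
Proof.
apply: functional_extensionality => w; rewrite /smul /ssub -sumrB.
by apply: eq_bigr => i _; rewrite mulrBl.
Qed.

Lemma smul_subr f g h : smul h (ssub f g) = ssub (smul h f) (smul h g).
Proof.
apply: functional_extensionality => w; rewrite /smul /ssub -sumrB.
by apply: eq_bigr => i _; rewrite mulrBr.
Qed.

Lemma smul0l h : smul szero h = szero.
Proof.
apply: functional_extensionality => w; rewrite /smul /szero.
by rewrite big1 // => i _; rewrite mul0r.
Qed.

Lemma mono_mul u v : smul (mono u) (mono v) = mono (u ++ v).
Proof.
apply: functional_extensionality => w; rewrite /smul /mono.
case: (eqVneq w (u ++ v)) => [->|Hne].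
  have Hlt : (size u < (size (u ++ v)).+1)%N by rewrite size_cat ltnS leq_addr.
  rewrite (bigD1 (Ordinal Hlt)) //= take_size_cat // drop_size_cat // !eqxx mulr1.
  rewrite big1 ?addr0 // => i /eqP Hi.
  case: eqP => [Hu|]; last by rewrite mul0r.
  exfalso; apply: Hi; apply: val_inj => /=.
  have Hs : size (take i (u ++ v)) = i by rewrite size_takel // -ltnS.
  by rewrite -Hs Hu.
rewrite big1 // => i _.
case: eqP => [Hu|]; last by rewrite mul0r.
case: eqP => [Hv|]; last by rewrite mulr0.
by move: Hne; rewrite -Hu -Hv cat_take_drop eqxx.
Qed.

Lemma inA_mono u : inA (mono u).
Proof. by exists [:: u] => w; rewrite mem_seq1 /mono => /negbTE ->. Qed.

Definition rel (I : ser -> Prop) a b := I (ssub (mono a) (mono b)).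

Lemma rel_refl I : is_ideal I -> forall a, rel I a a.
Proof.
case=> _ H0 _ _ _ a; rewrite /rel.
have -> : ssub (mono a) (mono a) = szero.
  by apply: functional_extensionality => w; rewrite /ssub /szero subrr.
exact: H0.
Qed.

Lemma rel_trans I : is_ideal I -> forall a b c, rel I a b -> rel I b c -> rel I a c.
Proof.
case=> _ _ Hadd _ _ a b c Hab Hbc; rewrite /rel.
have -> : ssub (mono a) (mono c) = sadd (ssub (mono a) (mono b)) (ssub (mono b) (mono c)).
  by apply: functional_extensionality => w; rewrite /ssub /sadd addrA subrK.
exact: Hadd.
Qed.

Lemma rel_sym I : is_ideal I -> forall a b, rel I a b -> rel I b a.
Proof.
case=> _ _ _ HL _ a b Hab; rewrite /rel.
have -> : ssub (mono b) (mono a) = smul (ssub szero (mono [::])) (ssub (mono a) (mono b)).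
  rewrite smul_subl smul0l smul_subr !mono_mul /=.
  by apply: functional_extensionality => w; rewrite /ssub /szero sub0r opprB.
apply: HL => //.
exists [:: [::]] => w; rewrite mem_seq1 /ssub /szero /mono => /negbTE ->.
by rewrite subrr.
Qed.

Lemma rel_ctx I : is_ideal I -> forall u v a b, rel I a b -> rel I (u ++ a ++ v) (u ++ b ++ v).
Proof.
case=> _ _ _ HL HR u v a b Hab; rewrite /rel.
have -> : ssub (mono (u ++ a ++ v)) (mono (u ++ b ++ v))
   = smul (smul (mono u) (ssub (mono a) (mono b))) (mono v).
  by rewrite smul_subr !mono_mul smul_subl !mono_mul !catA.
by apply: HR; [exact: inA_mono | apply: HL => //; exact: inA_mono].
Qed.
Definition sg (a : bool) : int := if a == letR then 1 else -1.
Definition hh (w : word) : int :=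
  (count (fun a => a == letR) w)%:Z - (count (fun a => a == letL) w)%:Z.

Lemma hh_cat u v : hh (u ++ v) = hh u + hh v.
Proof. rewrite /hh !count_cat !PoszD; lia. Qed.

Lemma hh_nil : hh [::] = 0.
Proof. by []. Qed.

Lemma hh1 a : hh [:: a] = sg a.
Proof. by case: a. Qed.

Lemma balancedE w : balanced w = (hh w == 0).
Proof. by rewrite /balanced /hh subr_eq0 eqz_nat. Qed.

Lemma ekE k w : (k <= size w)%N -> ek k w = hh (take k w).
Proof.
elim: k => [|k IH] Hk; first by rewrite /ek big_ord0 take0.
rewrite /ek big_ord_recr /= -/(ek k w) IH ?(ltnW Hk) //.
by rewrite (take_nth letL Hk) -cats1 hh_cat hh1.
Qed.
Lemma decomp w : w != [::] -> balanced w ->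
  exists (P F' A : word) (a : bool), [/\ w = P ++ F', balanced F', balanced A,
     P = a :: A ++ [:: ~~ a] & (if a then upper_prime P else lower_prime P)].
Proof.
case: w => [//|a s] _ Hb; set w := a :: s.
have Hw0 : hh w = 0 by move: Hb; rewrite balancedE => /eqP.
pose p k := (0 < k)%N && (hh (take k w) == 0).
have exP : exists k, p k by exists (size w); rewrite /p take_size Hw0 eqxx.
case: (ex_minnP exP) => m /andP [Hm0 /eqP Hm] Hmin.
have Hmle : (m <= size w)%N by apply: Hmin; rewrite /p take_size Hw0 eqxx.
have Hnz : forall k, (0 < k)%N -> (k < m)%N -> hh (take k w) != 0.
  move=> k Hk Hkm; apply/negP => /eqP H.
  have := Hmin k; rewrite /p Hk H eqxx => /(_ isT); lia.
have Hsign : forall k, (0 < k)%N -> (k < m)%N ->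
    (if a then 0 < hh (take k w) else hh (take k w) < 0).
  elim=> [//|k IH] _ Hkm.
  have Hk1 := Hnz _ (ltn0Sn k) Hkm.
  case: k IH Hk1 Hkm => [|k] IH Hk1 Hkm.
    by rewrite /= take0 hh1 /sg; case: (a).
  have Hk : (k.+1 < size w)%N by lia.
  have := IH (ltn0Sn k) (ltnW Hkm).
  rewrite (take_nth letL Hk) -cats1 hh_cat hh1 in Hk1 *.
  move: Hk1; rewrite /sg /letR.
  by case: (a); case: (nth letL w k.+1) => /=; lia.
have Hm1 : (1 < m)%N.
  rewrite ltnNge; apply/negP => Hle; have Hm' : m = 1%N by lia.
  by move: Hm; rewrite Hm' /= take0 hh1 /sg => /eqP; case: (a).
have [n Hn] : exists n, m = n.+2 by exists m.-2; lia.
subst m.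
have Hlast : nth letL w n.+1 = ~~ a.
  have Hk : (n.+1 < size w)%N by lia.
  have := Hsign n.+1 (ltn0Sn n) (ltnSn _).
  move: Hm; rewrite (take_nth letL Hk) -cats1 hh_cat hh1 /sg /letR.
  by case: (a); case: (nth letL w n.+1) => /=; lia.
have HP : take n.+2 w = a :: take n s ++ [:: ~~ a].
  have Hk : (n.+1 < size w)%N by lia.
  by rewrite (take_nth letL Hk) Hlast -cats1.
exists (take n.+2 w), (drop n.+2 w), (take n s), a.
have HsP : size (take n.+2 w) = n.+2 by rewrite size_takel.
have HekP : forall k, (k <= n.+1)%N -> ek k (take n.+2 w) = hh (take k w).
  move=> k Hk; rewrite ekE ?HsP; last lia.
  by rewrite take_takel //; lia.
have Hprime : prime_word (take n.+2 w).
  split; first by rewrite HP.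
  split; first by rewrite balancedE Hm.
  move=> [u [v [Hu Hv Hbu Hbv Huv]]].
  have Hsz : size (take n.+2 w) = (size u + size v)%N by rewrite Huv size_cat.
  have Hu0 : (0 < size u)%N by rewrite lt0n size_eq0.
  have Hv0 : (0 < size v)%N by rewrite lt0n size_eq0.
  have Hku : take (size u) w = u.
    by rewrite -(take_takel (j := n.+2)) ?Huv ?take_size_cat //; lia.
  have := Hnz (size u) Hu0; rewrite Hku; move: Hbu; rewrite balancedE => ->.
  by move=> /(_ ltac:(lia)).
split.
- by rewrite cat_take_drop.
- move: Hw0; rewrite balancedE -{1}(cat_take_drop n.+2 w) hh_cat Hm add0r => ->.
  by [].
- move: Hm; rewrite HP -cat1s !hh_cat !hh1 /sg /letR balancedE.
  by case: (a) => /=; lia.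
- by rewrite -HP.
- have Hs : forall k, (1 <= k)%N -> (k <= (size (take n.+2 w)).-1)%N ->
      (if a then 0 < ek k (take n.+2 w) else ek k (take n.+2 w) < 0).
    move=> k Hk1 Hk2; rewrite HsP /= in Hk2; rewrite HekP //.
    by apply: Hsign; lia.
  by case: (a) Hs HP => Hs HP; split.
Qed.

Lemma rel_ctxl I : is_ideal I -> forall u a b, rel I a b -> rel I (u ++ a) (u ++ b).
Proof. move=> HI u a b H; have := rel_ctx HI u [::] H; by rewrite !cats0. Qed.

Lemma rel_ctxr I : is_ideal I -> forall v a b, rel I a b -> rel I (a ++ v) (b ++ v).
Proof. move=> HI v a b H; exact: (rel_ctx HI [::] v H). Qed.

Lemma bal_block (a : bool) A : balanced A -> balanced (a :: A ++ [:: ~~ a]).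
Proof.
rewrite !balancedE -cat1s !hh_cat !hh1 => /eqP ->; rewrite /sg /letR.
by case: a.
Qed.

Lemma main I : is_ideal I -> (forall s, Sgen'' s -> I s) ->
  forall n F G, balanced F -> balanced G -> (size F + size G <= n)%N ->
  rel I (F ++ G) (G ++ F).
Proof.
move=> HI Hs; elim=> [|n IH] F G HF HG Hsz.
  have -> : F = [::] by move: Hsz; case: (F).
  by rewrite cats0; apply: rel_refl.
case: (eqVneq F [::]) => [->|HF0]; first by rewrite cats0; apply: rel_refl.
case: (eqVneq G [::]) => [->|HG0]; first by rewrite cats0; apply: rel_refl.
have [P [F' [A [a [EF HF' HA EP HPa]]]]] := decomp HF0 HF.
have [Q [G' [B [b [EG HG' HB EQ HQb]]]]] := decomp HG0 HG.
have HbP : balanced P by rewrite EP; exact: bal_block.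
have HbQ : balanced Q by rewrite EQ; exact: bal_block.
have HsF : size F = (size A + 2 + size F')%N by rewrite EF EP size_cat /= size_cat /=; lia.
have HsG : size G = (size B + 2 + size G')%N by rewrite EG EQ size_cat /= size_cat /=; lia.
have HsP : size P = (size A + 2)%N by rewrite EP /= size_cat /=; lia.
have HsQ : size Q = (size B + 2)%N by rewrite EQ /= size_cat /=; lia.
have Hn : (size A + 2 + size F' + (size B + 2 + size G') <= n.+1)%N.
  by move: Hsz; rewrite HsF HsG.
case: (eqVneq F' [::]) => [EF'|HF'0].
  2: {
  have HF'1 : (0 < size F')%N by rewrite lt0n size_eq0.
  have H1 : rel I (P ++ G) (G ++ P).
  apply: IH => //; rewrite HsP; lia.
  have H2 : rel I (F' ++ G) (G ++ F').
  apply: IH => //; rewrite ?HsG; lia.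
  rewrite EF -catA; apply: (rel_trans HI (b := P ++ G ++ F')).
    exact: (rel_ctxl HI).
  by rewrite !catA; apply: (rel_ctxr HI). }
rewrite EF' cats0 in EF; subst F.
case: (eqVneq G' [::]) => [EG'|HG'0].
  2: {
  have HG'1 : (0 < size G')%N by rewrite lt0n size_eq0.
  have H1 := IH P Q HbP HbQ ltac:(rewrite ?/M ?HsP ?HsQ /=; lia).
  have H2 := IH P G' HbP HG' ltac:(rewrite ?/M ?HsP ?HsQ /=; lia).
  rewrite EG; apply: (rel_trans HI (b := Q ++ P ++ G')).
    by rewrite !catA; apply: (rel_ctxr HI).
  by rewrite -catA; apply: (rel_ctxl HI). }
rewrite EG' cats0 in EG; subst G.
case: a b EP HPa EQ HQb => [] [] EP HPa EQ HQb.
-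
  set M := [:: false; true].
  have HM : balanced M by [].
  have H1 := IH A M HA HM ltac:(rewrite ?/M ?HsP ?HsQ /=; lia).
  have H2 := IH A B HA HB ltac:(rewrite ?/M ?HsP ?HsQ /=; lia).
  have H3 := IH M B HM HB ltac:(rewrite ?/M ?HsP ?HsQ /=; lia).
  have Hc : rel I (A ++ M ++ B) (B ++ M ++ A).
    apply: (rel_trans HI (b := M ++ A ++ B)).
      by rewrite !catA; apply: (rel_ctxr HI).
    apply: (rel_trans HI (b := M ++ B ++ A)); first exact: (rel_ctxl HI).
    by rewrite !catA; apply: (rel_ctxr HI).
  have := rel_ctx HI [:: true] [:: false] Hc.
  by rewrite EP EQ /= -!catA.
- by apply: Hs; exists P, Q; split.
- by apply: rel_sym => //; apply: Hs; exists Q, P; split.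
- set M := [:: true; false].
  have HM : balanced M by [].
  have H1 := IH A M HA HM ltac:(rewrite ?/M ?HsP ?HsQ /=; lia).
  have H2 := IH A B HA HB ltac:(rewrite ?/M ?HsP ?HsQ /=; lia).
  have H3 := IH M B HM HB ltac:(rewrite ?/M ?HsP ?HsQ /=; lia).
  have Hc : rel I (A ++ M ++ B) (B ++ M ++ A).
    apply: (rel_trans HI (b := M ++ A ++ B)).
      by rewrite !catA; apply: (rel_ctxr HI).
    apply: (rel_trans HI (b := M ++ B ++ A)); first exact: (rel_ctxl HI).
    by rewrite !catA; apply: (rel_ctxr HI).
  have := rel_ctx HI [:: false] [:: true] Hc.
  by rewrite EP EQ /= -!catA.
Qed.

Theorem proposition5p3 :
  forall x : ser, gen_ideal Sgen'' x <-> gen_ideal Sgen x.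
Proof.
move=> x; split.
- move=> H I HI HS; apply: (H I HI) => s [U [D [HU HD ->]]]; apply: HS.
  case: HU => [[HU0 [HUb _]] _]; case: HD => [[HD0 [HDb _]] _].
  by exists U, D; split.
- move=> H I HI HS; apply: (H I HI) => s [F [G [_ _ HF HG ->]]].
  exact: (@main I HI HS (size F + size G) F G HF HG (leqnn _)).
Qed.
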